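(* For every $n\ge1$ and every integer $k\ge0$, the set of SR states $c$ on $K_n^0$ with $\sum_{i=1}^n c_i-\binom{n}{2}=k$ equals the set of integer lattice points of the convex hull (in $\mathbb{R}^n$) of the set of DR states $c$ on $K_n^0$ with $\sum_{i=1}^n c_i-\binom{n}{2}=k$.
   Context: $K_n^0$ is the complete graph on vertex set $\{0,1,\dots,n\}$ with sink $0$; every vertex has degree $n$. A configuration is $c\in\mathbb{Z}_{\ge0}^n$, stable if $c_i\le n-1$ for all $i$. ASM: an unstable vertex topples by sending one grain to each neighbour (grains to the sink disappear). SSM (parameter $p\in(0,1)$): an unstable vertex $i$, independently for each incident edge, sends one grain along it with probability $p$, otherwise keeps it. Each model gives a Markov chain on stable configurations: add a grain at vertex $i$ with probability $\mu_i>0$, then stabilise. DR = recurrent for the ASM chain, SR = recurrent for the SSM chain. The quantity $\sum_i c_i-\binom n2$ is the level of $c$. *)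

(* Defs.v *)
From HB Require Import structures.
From mathcomp Require Import all_boot all_order all_algebra.
From mathcomp Require Import reals.
Set Implicit Arguments. Unset Strict Implicit. Unset Printing Implicit Defensive.
Import Order.TTheory GRing.Theory Num.Theory.

(* K_n^0 : vertices {0,1,...,n}, sink 0.  Non-sink vertex j+1 is represented
   by j : 'I_n.  Every vertex has degree n: non-sink vertex j is adjacent to
   the sink and to the n-1 other non-sink vertices. *)

Definition config (n : nat) := 'I_n -> nat.

Definition stable (n : nat) (c : config n) : Prop := forall i, c i <= n.-1.
Definition unstable_at (n : nat) (c : config n) (i : 'I_n) : Prop := n <= c i.

Definition add_grain (n : nat) (c : config n) (i : 'I_n) : config n :=
  fun j => if j == i then (c j).+1 else c j.

(* ASM toppling of an (unstable) vertex i: one grain to every neighbour,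
   the grain sent to the sink disappears. *)
Definition asm_topple (n : nat) (c : config n) (i : 'I_n) : config n :=
  fun j => if j == i then c j - n else (c j).+1.

(* SSM toppling of an (unstable) vertex i in which the set of edges that
   actually carry a grain is: the edge to the sink iff [b], and the edges to
   the non-sink vertices in [T] (with i \notin T).  Every such choice has
   positive probability p^{|S|}(1-p)^{n-|S|} for p in (0,1). *)
Definition ssm_topple (n : nat) (c : config n) (i : 'I_n) (b : bool)
  (T : {set 'I_n}) : config n :=
  fun j => if j == i then c j - (b + #|T|) else (c j + (j \in T))%N.

Definition asm_step (n : nat) (c d : config n) : Prop :=
  exists i, unstable_at c i /\ d = asm_topple c i.

Definition ssm_step (n : nat) (c d : config n) : Prop :=
  exists i b (T : {set 'I_n}),
    unstable_at c i /\ i \notin T /\ d = ssm_topple c i b T.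

Inductive rtc (A : Type) (r : A -> A -> Prop) : A -> A -> Prop :=
| rtc_refl x : rtc r x x
| rtc_step x y z : r x y -> rtc r y z -> rtc r x z.

Definition asm_stabilises_to (n : nat) (c d : config n) : Prop :=
  rtc (@asm_step n) c d /\ stable d.
Definition ssm_stabilises_to (n : nat) (c d : config n) : Prop :=
  rtc (@ssm_step n) c d /\ stable d.

(* Transitions with positive probability of the Markov chains on stable
   configurations (add a grain at i, which has probability mu_i > 0, then
   stabilise). *)
Definition asm_trans (n : nat) (c d : config n) : Prop :=
  stable c /\ exists i, asm_stabilises_to (add_grain c i) d.
Definition ssm_trans (n : nat) (c d : config n) : Prop :=
  stable c /\ exists i, ssm_stabilises_to (add_grain c i) d.

Definition recurrent (n : nat) (tr : config n -> config n -> Prop)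
  (c : config n) : Prop :=
  stable c /\ forall d, rtc tr c d -> rtc tr d c.

Definition DR (n : nat) (c : config n) : Prop := recurrent (@asm_trans n) c.
Definition SR (n : nat) (c : config n) : Prop := recurrent (@ssm_trans n) c.

Definition has_level (n : nat) (c : config n) (k : nat) : Prop :=
  (\sum_(i < n) c i)%N = ('C(n, 2) + k)%N.

Definition in_conv_hull (R : realType) (n : nat) (S : config n -> Prop)
  (x : 'I_n -> R) : Prop :=
  exists (m : nat) (p : 'I_m -> config n) (w : 'I_m -> R),
    [/\ forall j, S (p j),
        forall j, 0 <= w j,
        \sum_(j < m) w j = 1
      & forall i, x i = \sum_(j < m) w j * ((p j i)%:R)]%R.

(* Main.v *)
Require Import Defs.
From HB Require Import structures.
From mathcomp Require Import all_boot all_order all_algebra.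
From mathcomp Require Import reals.
From mathcomp Require Import zify ring lra.
From Stdlib Require Import FunctionalExtensionality.
Import Order.TTheory GRing.Theory Num.Theory.
Set Implicit Arguments. Unset Strict Implicit. Unset Printing Implicit Defensive.
Ltac blia := repeat change (nat_of_bool true) with 1 in *; repeat change (nat_of_bool false) with 0 in *; lia.
Definition Qc (n : nat) (c : config n) : Prop :=
  forall A : {set 'I_n}, 'C(#|A|, 2) <= \sum_(i in A) c i.
Definition cmax (n : nat) : config n := fun _ => n.-1.
Arguments cmax : clear implicits.

Lemma rtc_trans A (r : A -> A -> Prop) x y z : rtc r x y -> rtc r y z -> rtc r x z.
Proof. elim=> // x0 y0 z0 H _ IH Hz. exact: rtc_step H (IH Hz). Qed.

Lemma rtc_one A (r : A -> A -> Prop) x y : r x y -> rtc r x y.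
Proof. move=> H; apply: rtc_step H (rtc_refl _ _). Qed.

Lemma rtc_mono A (r s : A -> A -> Prop) :
  (forall x y, r x y -> s x y) -> forall x y, rtc r x y -> rtc s x y.
Proof. move=> H x y; elim=> [z|x0 y0 z0 Hr _ IH]; [exact: rtc_refl|exact: rtc_step (H _ _ Hr) IH]. Qed.

Lemma rtc_inv A (r : A -> A -> Prop) (P : A -> Prop) x y :
  (forall x y, r x y -> P x -> P y) -> P x -> rtc r x y -> P y.
Proof. move=> H Px Hr; elim: Hr Px => // x0 y0 z0 Hr _ IH Px; exact: IH (H _ _ Hr Px). Qed.

Lemma bin2_rec a : 'C(a.+1, 2) = 'C(a, 2) + a.
Proof. by rewrite binS bin1. Qed.

Lemma bin2_le a : 'C(a, 2) <= a * a.-1.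
Proof. elim: a => // a IH; rewrite bin2_rec /=; case: a IH => //= a IH; nia. Qed.

Lemma sum_ind (n : nat) (A T : {set 'I_n}) :
  \sum_(j in A) ((j \in T) : nat) = #|A :&: T|.
Proof.
rewrite (eq_bigr (fun j => if j \in T then 1 else 0)); last by move=> j _; case: (j \in T).
rewrite -big_mkcondr sum1_card; apply: eq_card => j; by rewrite !inE.
Qed.

Lemma Q_add (n : nat) (c : config n) i : Qc c -> Qc (add_grain c i).
Proof.
move=> HQ A; apply: leq_trans (HQ A) _; apply: leq_sum => j _.
by rewrite /add_grain; case: (j == i).
Qed.

Lemma Q_ssm_topple (n : nat) (c : config n) i b (T : {set 'I_n}) :
  unstable_at c i -> i \notin T -> Qc c -> Qc (ssm_topple c i b T).
Proof.
rewrite /unstable_at => Hi HT HQ A.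
case: (boolP (i \in A)) => HiA; last first.
  apply: leq_trans (HQ A) _; apply: leq_sum => j Hj.
  rewrite /ssm_topple; case: eqP => [Eji|_]; first by rewrite -Eji Hj in HiA.
  exact: leq_addr.
rewrite (big_setD1 _ HiA) /= /ssm_topple eqxx.
rewrite (eq_bigr (fun j => c j + (j \in T))); last first.
  by move=> j; rewrite !inE => /andP[/negbTE -> _].
rewrite big_split /= sum_ind.
have HQ' := HQ (A :\ i).
have cA : #|A| = (#|A :\ i|).+1 by rewrite (cardsD1 i A) HiA.
have E1 : (A :\ i) :&: T = A :&: T.
  apply/setP => j; rewrite !inE; case: (boolP (j == i)) => [/eqP ->|] //=.
  by rewrite (negbTE HT) andbF.
have cT : #|T| = #|T :&: A| + #|T :\: A| by rewrite cardsID.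
have cTA : #|T :\: A| + #|A| <= n.
  have : #|T :\: A| <= #|~: A|.
    by apply: subset_leq_card; rewrite setDE subsetIr.
  have := cardsC A; rewrite card_ord; lia.
rewrite E1 setIC in HQ' *; rewrite cA bin2_rec.
have : b <= 1 by case: b.
move: HQ' cT cTA Hi; rewrite cA; move: (c i) (nat_of_bool b) (\sum_(i0 in A :\ i) c i0) #|T| #|T :&: A| #|T :\: A| #|A :\ i| 'C(#|A :\ i|, 2) => x y z u v w s t; lia.
Qed.

Lemma Q_cmax n : Qc (cmax n).
Proof.
move=> A; rewrite /cmax sum_nat_const.
have : #|A| <= n by have := max_card (mem A); rewrite card_ord.
have := bin2_le #|A|; nia.
Qed.

Lemma Q_ssm_step n (c d : config n) : ssm_step c d -> Qc c -> Qc d.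
Proof. case=> i [b [T [Hi [HT ->]]]]; exact: Q_ssm_topple. Qed.

Lemma Q_ssm_trans n (c d : config n) : ssm_trans c d -> Qc c -> Qc d.
Proof.
case=> _ [i [Hr _]] HQ.
exact: (rtc_inv (@Q_ssm_step n) (Q_add i HQ) Hr).
Qed.

Lemma asm_ssm_topple n (c : config n) i :
  asm_topple c i = ssm_topple c i true [set~ i].
Proof.
have Hn : 0 < n := leq_ltn_trans (leq0n _) (ltn_ord i).
apply: functional_extensionality => j; rewrite /asm_topple /ssm_topple cardsC1 card_ord !inE.
case: eqP => _ /=; [rewrite add1n prednK //|by rewrite addn1].
Qed.

Lemma asm_ssm_step n (c d : config n) : asm_step c d -> ssm_step c d.
Proof.
case=> i [Hi ->]; exists i, true, [set~ i]; split => //; split.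
  by rewrite !inE eqxx.
exact: asm_ssm_topple.
Qed.

Lemma asm_ssm_trans n (c d : config n) : asm_trans c d -> ssm_trans c d.
Proof.
case=> Hs [i [Hr Hd]]; split => //; exists i; split => //.
exact (rtc_mono (@asm_ssm_step n) Hr).
Qed.

Lemma reach_cmax n (d : config n) : stable d -> rtc (@asm_trans n) d (cmax n).
Proof.
move=> Hs; have [m Hm] : exists m, \sum_i (n.-1 - d i) = m by eexists.
elim: m d Hm Hs => [|m IH] d Hm Hs.
  have -> : d = cmax n; last exact: rtc_refl.
  apply: functional_extensionality => j; rewrite /cmax.
  have := Hs j; move/eqP: Hm; rewrite sum_nat_eq0 => /forallP /(_ j) /=.
  move/eqP; lia.
case: (boolP [exists j, d j < n.-1]) => [/existsP [j Hj]|Hno]; last first.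
  exfalso; move: Hm; rewrite big1 // => i _.
  apply/eqP; rewrite subn_eq0; have := Hs i; move/negP: Hno => Hno.
  case: ltngtP => // Hlt _; by exfalso; apply: Hno; apply/existsP; exists i.
have Hs' : stable (add_grain d j).
  by move=> i; rewrite /add_grain; case: eqP => [->|_] //; exact: Hs.
apply: rtc_step (IH _ _ Hs').
  by split=> //; exists j; split => //; exact: rtc_refl.
rewrite (bigD1 j) //= in Hm; rewrite (bigD1 j) //= /add_grain eqxx.
rewrite (eq_bigr (fun i => n.-1 - d i)); last by move=> i /negbTE ->.
lia.
Qed.

Lemma DR_Q n (c : config n) : DR c -> Qc c.
Proof.
case=> Hs Hrec; have H2 := Hrec _ (reach_cmax Hs).
apply: (@rtc_inv _ _ (@Qc n) _ _ (@Q_ssm_trans n) (@Q_cmax n)).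
exact (rtc_mono (@asm_ssm_trans n) H2).
Qed.

Lemma SR_Q n (c : config n) : SR c -> Qc c.
Proof.
case=> Hs Hrec.
have H2 := Hrec _ (rtc_mono (@asm_ssm_trans n) (reach_cmax Hs)).
exact: (@rtc_inv _ _ (@Qc n) _ _ (@Q_ssm_trans n) (@Q_cmax n)).
Qed.
Lemma bin2_mul2 k : 'C(k, 2) * 2 = k * k.-1.
Proof. elim: k => // k IH; rewrite binS bin1 mulnDl IH; case: k {IH} => //= k; lia. Qed.

Lemma poly_id r s x :
 (r.+1 + x) * ((r.+1 + s) * (r + s)) + 2 * ((r.+1 + x) * r.+1) + 2 * (r.+1 * (s + x))
 <= r.+1 * ((r.+1 + (s + x) + 1) * (r.+1 + (s + x))) + x * (s * s.-1).
Proof.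
case: s => [|s]; case: x => [|x] /=; lia.
Qed.

Lemma arith_core r s x X Y Z :
  'C(s, 2) <= Y -> 'C(r + (s + x) + 1, 2) <= X + Y + Z + (s + x) ->
  r * Z <= x * X -> 'C(r + s, 2) + r <= X + Y.
Proof.
case: r => [|r]; first by move=> H1 _ _; rewrite add0n addn0; apply: leq_trans H1 (leq_addl _ _).
move=> H1 H2 H3.
have K1 := leq_mul (leqnn r.+1) H2.
have K3 := leq_mul (leqnn x) H1.
have P : (r.+1 + x) * ('C(r.+1 + s, 2) + r.+1) + r.+1 * (s + x) <= r.+1 * 'C(r.+1 + (s + x) + 1, 2) + x * 'C(s, 2).
  rewrite -(@leq_pmul2l 2) //.
  have E1 := bin2_mul2 s; have E2 := bin2_mul2 (r.+1 + (s + x) + 1); have E3 := bin2_mul2 (r.+1 + s).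
  rewrite addn1 /= in E2; rewrite addSn /= in E3.
  have := poly_id r s x.
  rewrite addn1 -E1 -E2 -E3. try rewrite !addn1.
  move: 'C(s, 2) 'C((r.+1 + (s + x)).+1, 2) 'C(r.+1 + s, 2) => a b c; lia.
rewrite -(@leq_pmul2l (r.+1 + x)) //.
move: P K1 K3 H3; move: 'C(s, 2) 'C(r.+1 + (s + x) + 1, 2) 'C(r.+1 + s, 2) => a b c.
lia.
Qed.

Lemma top_set n (c : config n) (B : {set 'I_n}) m : m <= #|B| ->
  exists T : {set 'I_n}, [/\ T \subset B, #|T| = m &
    forall w v, w \in T -> v \in B -> v \notin T -> c v <= c w].
Proof.
elim: m => [|m IH] Hm.
  by exists set0; split => //; [exact: sub0set|rewrite cards0|move=> w v; rewrite inE].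
have [T [HTB HTc HT]] := IH (ltnW Hm).
have : 0 < #|B :\: T|.
  by rewrite cardsD (setIidPr HTB) HTc; lia.
rewrite card_gt0 => /set0Pn [x0 Hx0].
have [w Hw Hmax] := @arg_maxnP _ x0 (mem (B :\: T)) c Hx0.
move: Hw; rewrite !inE; case/andP => HwT HwB.
exists (w |: T); split.
- by rewrite subUset sub1set HwB HTB.
- by rewrite cardsU1 HwT HTc.
- move=> x v; rewrite !inE negb_or => /orP [/eqP ->|HxT] HvB /andP [Hvw HvT].
    by apply: Hmax; rewrite !inE HvT HvB.
  exact: HT.
Qed.

Definition predc n (c : config n) (u : 'I_n) (T : {set 'I_n}) : config n :=
  fun j => if j == u then n.-1 else if j \in T then (c j).-1 else c j.

Lemma Q_pred n (c : config n) (u : 'I_n) (T : {set 'I_n}) :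
  Qc c -> u \notin T -> c u + #|T| = n.-1 ->
  (forall w v, w \in T -> v != u -> v \notin T -> c v <= c w) ->
  Qc (predc c u T).
Proof.
move=> HQ HuT Hcard Htop A.
have Hn : 0 < n := leq_ltn_trans (leq0n _) (ltn_ord u).
have Hle : forall j, j != u -> c j <= predc c u T j + (j \in T).
  move=> j /negbTE Hj; rewrite /predc Hj; case: (j \in T) => /=; lia.
have Hsum : forall B : {set 'I_n}, u \notin B ->
    \sum_(j in B) c j <= \sum_(j in B) predc c u T j + #|B :&: T|.
  move=> B HuB; rewrite -sum_ind -big_split /=; apply: leq_sum => j Hj.
  by apply: Hle; apply: contraNneq HuB => <-.
case: (boolP (u \in A)) => HuA.
  have H1 := HQ A; rewrite (big_setD1 u) //= in H1.
  rewrite (big_setD1 u) //= {1}/predc eqxx.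
  have H2 := Hsum (A :\ u); rewrite !inE eqxx /= in H2; have {}H2 := H2 isT.
  have H3 : #|(A :\ u) :&: T| <= #|T| by apply: subset_leq_card; rewrite subsetIr.
  apply: leq_trans H1 _; rewrite -Hcard -addnA leq_add2l.
  apply: leq_trans H2 _; rewrite [X in _ <= X]addnC; exact: leq_add.
set N := [set v | (v != u) && (v \notin T)].
set X := \sum_(j in A :&: T) c j.
set Y := \sum_(j in A :\: T) c j.
set Z := \sum_(j in N :\: A) c j.
have HA : \sum_(j in A) c j = X + Y by rewrite (big_setID T).
have F1 := Hsum A HuA.
have F2 := HQ (A :\: T).
have cN : #|N| + #|T| + 1 = n.
  have -> : N = ~: (u |: T) by apply/setP => j; rewrite !inE negb_or.
  have := cardsC (u |: T); rewrite cardsU1 HuT card_ord /=; move: (#|T|) (#|~: (u |: T)|) => a b; lia.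
have NA : N :&: A = A :\: T.
  apply/setP => j; rewrite !inE; case: (boolP (j \in A)) => Hj; rewrite ?andbF ?andbT //=.
  by have -> : j != u by apply: contraNneq HuA => <-.
have cNA : #|A :\: T| + #|N :\: A| = #|N| by rewrite -NA cardsID.
have cA : #|A :&: T| + #|A :\: T| = #|A| by rewrite cardsID.
set S := u |: (A :|: N).
have HuAN : u \notin A :|: N by rewrite !inE (negbTE HuA) eqxx.
have E1 : (A :|: N) :&: A = A by rewrite setUK.
have E2 : (A :|: N) :\: A = N :\: A by rewrite setDUl setDv set0U.
have cS : #|S| = #|A :&: T| + (#|A :\: T| + #|N :\: A|) + 1.
  rewrite cardsU1 HuAN -(cardsID A (A :|: N)) E1 E2 -cA; change (nat_of_bool true) with 1.
  move: #|A :&: T| #|A :\: T| #|N :\: A| => a b d; lia.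
have F3 := HQ S.
rewrite /S (big_setU1 u) //= (big_setID A) /= E1 E2 -/Z HA in F3.
have F4 : #|A :&: T| * Z <= #|N :\: A| * X.
  rewrite /Z big_distrr /= -[#|N :\: A| * X]sum_nat_const; apply: leq_sum => v Hv.
  rewrite -sum_nat_const /X; apply: leq_sum => w Hw.
  move: Hv Hw; rewrite !inE => /andP [_ /andP [Hvu HvT]] /andP [_ HwT].
  exact: Htop.
have Hcu : c u = #|A :\: T| + #|N :\: A|.
  move: Hcard cN cNA; move: #|A :\: T| #|N :\: A| #|N| #|T| (c u) => a b d e f; lia.
rewrite cS Hcu in F3.
have F3' : 'C(#|A :&: T| + (#|A :\: T| + #|N :\: A|) + 1, 2) <= X + Y + Z + (#|A :\: T| + #|N :\: A|).
  move: F3; move: 'C(#|A :&: T| + (#|A :\: T| + #|N :\: A|) + 1, 2) => C; lia.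
have K := arith_core F2 F3' F4.
have K2 : 'C(#|A :&: T| + #|A :\: T|, 2) + #|A :&: T| <= \sum_(j in A) predc c u T j + #|A :&: T|.
  apply: leq_trans K _; rewrite -HA; exact: F1.
by rewrite -cA; rewrite leq_add2r in K2.
Qed.

Lemma sum_indT n (T : {set 'I_n}) : \sum_j ((j \in T) : nat) = #|T|.
Proof.
rewrite (eq_bigr (fun j => if j \in T then 1 else 0)); last by move=> j _; case: (j \in T).
by rewrite -big_mkcond sum1_card.
Qed.

Lemma sum_pt n (u : 'I_n) (k : nat) : \sum_j ((j == u) * k) = k.
Proof.
rewrite (bigD1 u) //= eqxx mul1n big1 ?addn0 //.
by move=> j /negbTE ->.
Qed.

Lemma sum_predc n (c : config n) u (T : {set 'I_n}) : u \notin T -> (forall w, w \in T -> 0 < c w) ->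
  \sum_j predc c u T j + #|T| + c u = \sum_j c j + n.-1.
Proof.
move=> HuT Hpos.
rewrite -sum_indT -(sum_pt u (c u)) -(sum_pt u n.-1) -!big_split /=.
apply: eq_bigr => j _; rewrite /predc.
case: (boolP (j == u)) => [/eqP ->|Hju]; first by rewrite (negbTE HuT) /= !mul1n; lia.
case: (boolP (j \in T)) => HjT /=; rewrite !mul0n ?addn0 //.
by have := Hpos _ HjT; lia.
Qed.

Lemma predc_stable n (c : config n) u (T : {set 'I_n}) : stable c -> stable (predc c u T).
Proof.
move=> Hs j; rewrite /predc; case: (j == u) => //; case: (j \in T) => //.
exact: leq_trans (leq_pred _) (Hs j).
Qed.

Lemma Q_mono n (c1 c2 : config n) : (forall j, c1 j <= c2 j) -> Qc c1 -> Qc c2.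
Proof. move=> H HQ A; apply: leq_trans (HQ A) _; exact: leq_sum. Qed.

Lemma Q_pair n (c : config n) p q : Qc c -> p != q -> 1 <= c p + c q.
Proof.
move=> HQ Hpq; have := HQ [set p; q].
rewrite cards2 Hpq (big_setU1 p) ?big_set1 //=.
by rewrite inE.
Qed.

Lemma trans_B n (c : config n) u (T : {set 'I_n}) : stable c -> u \notin T -> c u + #|T| = n.-1 ->
  (forall w, w \in T -> 0 < c w) -> ssm_trans (predc c u T) c.
Proof.
move=> Hs HuT Hcard Hpos.
have Hn : 0 < n := leq_ltn_trans (leq0n _) (ltn_ord u).
split; first exact: predc_stable.
exists u; split => //; apply: rtc_one; exists u, true, T; split; last split => //.
  by rewrite /unstable_at /add_grain /predc !eqxx prednK.
apply: functional_extensionality => j; rewrite /ssm_topple /add_grain /predc.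
case: (boolP (j == u)) => [/eqP ->|Hju]; first by rewrite ?eqxx prednK //; lia.
case: (boolP (j \in T)) => HjT /=; last by rewrite addn0.
by have := Hpos _ HjT; lia.
Qed.

Lemma trans_A n (c : config n) u (T : {set 'I_n}) x : stable c -> u \notin T -> c u + #|T| = n.-1 ->
  (forall w, w \in T -> 0 < c w) -> x \in T -> c x = n.-1 ->
  ssm_trans (predc c u (T :\ x)) c.
Proof.
move=> Hs HuT Hcard Hpos HxT Hx.
have Hn : 0 < n := leq_ltn_trans (leq0n _) (ltn_ord u).
have Hxu : x != u by apply: contraNneq HuT => <-.
split; first exact: predc_stable.
exists u; split => //.
apply: (@rtc_step _ _ _ (fun j => if j == x then n else c j)).
  exists u, true, T; split; last split => //.
    by rewrite /unstable_at /add_grain /predc !eqxx prednK.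
  apply: functional_extensionality => j; rewrite /ssm_topple /add_grain /predc.
  case: (boolP (j == u)) => [/eqP ->|Hju].
    by rewrite eq_sym (negbTE Hxu); change (nat_of_bool true) with 1; lia.
  rewrite !inE.
  case: (boolP (j == x)) => [/eqP ->|Hjx] /=; first by rewrite HxT Hx addn1 prednK.
  case: (boolP (j \in T)) => HjT /=; last by rewrite addn0.
  by have := Hpos _ HjT; lia.
apply: rtc_one; exists x, true, set0; split; last split.
- by rewrite /unstable_at eqxx.
- by rewrite inE.
- apply: functional_extensionality => j; rewrite /ssm_topple cards0 inE addn0.
  case: (boolP (j == x)) => [/eqP ->|Hjx]; first by rewrite Hx subn1.
  by rewrite addn0.
Qed.

Definition mu n (c : config n) : nat := 2 * \sum_j c j + [exists j, c j == n.-1].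

Lemma sum_stable n (c : config n) : stable c -> \sum_j c j <= n * n.-1.
Proof.
move=> Hs; have -> : n * n.-1 = \sum_(j < n) n.-1 by rewrite sum_nat_const card_ord.
by apply: leq_sum => j _; exact: Hs.
Qed.

Lemma ssm_step_lemma n (c : config n) : Qc c -> stable c -> ~~ [forall j, c j == n.-1] ->
  exists c', [/\ Qc c', stable c', mu c < mu c' & ssm_trans c' c].
Proof.
move=> HQ Hs /forallPn [j0 Hj0].
have [u _ Hmin] := @arg_minnP _ j0 predT c isT.
have Hn : 0 < n := leq_ltn_trans (leq0n _) (ltn_ord u).
have Hu : c u < n.-1.
  have := Hmin j0 isT; have := Hs j0; move: Hj0; case: ltngtP => //; lia.
have Hm : n.-1 - c u <= #|[set~ u]| by rewrite cardsC1 card_ord leq_subr.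
have [T [HTsub HTc HTtop]] := top_set c Hm.
have HuT : u \notin T by apply/negP => /(subsetP HTsub); rewrite !inE eqxx.
have Hcard : c u + #|T| = n.-1 by rewrite HTc; lia.
have Htop : forall w v, w \in T -> v != u -> v \notin T -> c v <= c w.
  by move=> w v HwT Hvu HvT; apply: HTtop => //; rewrite !inE.
have Hpos : forall w, w \in T -> 0 < c w.
  move=> w HwT; have Hwu : u != w by apply: contraNneq HuT => ->.
  have := Q_pair HQ Hwu; have := Hmin w isT; lia.
have HQ' := Q_pred HQ HuT Hcard Htop.
have Hsum := sum_predc HuT Hpos.
case: (boolP [exists j, c j == n.-1]) => [/existsP [x /eqP Hx]|Hno].
  have [x' [Hx'T Hx']] : exists x', x' \in T /\ c x' = n.-1.
    case: (boolP (x \in T)) => HxT; first by exists x.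
    have : 0 < #|T| by lia.
    rewrite card_gt0 => /set0Pn [w HwT]; exists w; split => //.
    have Hxu : x != u by apply/eqP => E; move: Hu; rewrite -E Hx ltnn.
    have := Htop w x HwT Hxu HxT; have := Hs w; lia.
  have HuT' : u \notin T :\ x' by rewrite inE negb_and HuT orbT.
  have Hpos' : forall w, w \in T :\ x' -> 0 < c w.
    by move=> w; rewrite inE => /andP [_ /Hpos].
  have Hsum' := sum_predc HuT' Hpos'.
  exists (predc c u (T :\ x')); split.
  - apply: Q_mono HQ' => j; rewrite /predc; case: (j == u) => //.
    rewrite inE; case: (boolP (j \in T)) => HjT; rewrite ?andbT ?andbF //.
    by case: (j \notin [set x']) => //; exact: leq_pred.
  - exact: predc_stable.
  - rewrite /mu; have HT1 : #|T| = #|T :\ x'|.+1 by rewrite (cardsD1 x' T) Hx'T.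
    move: (\sum_j predc c u (T :\ x') j) (\sum_j c j) Hsum' Hcard HT1 => a b Hsum' Hcard' HT1.
    move: #|T| #|T :\ x'| (c u) Hsum' Hcard' HT1 => t1 t2 cu Hsum' Hcard' HT1.
    case: [exists j, c j == n.-1]; case: [exists j, predc c u (T :\ x') j == n.-1];
      rewrite /nat_of_bool; lia.
  - exact: trans_A.
exists (predc c u T); split => //.
- exact: predc_stable.
- rewrite /mu (negbTE Hno).
  have -> : [exists j, predc c u T j == n.-1].
    by apply/existsP; exists u; rewrite /predc eqxx.
  move: (\sum_j predc c u T j) (\sum_j c j) Hsum Hcard => a b Hsum' Hcard'.
  move: #|T| (c u) Hsum' Hcard' => t1 cu Hsum' Hcard'.
  rewrite /nat_of_bool; lia.
- exact: trans_B.
Qed.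

Lemma reach_Q n (c : config n) : 0 < n -> Qc c -> stable c -> rtc (@ssm_trans n) (cmax n) c.
Proof.
move=> Hn; set B := 2 * (n * n.-1) + 1.
have [k Hk] : exists k, B - mu c <= k by exists (B - mu c).
elim: k c Hk => [|k IH] c Hk HQ Hs.
  case: (boolP [forall j, c j == n.-1]) => Hall.
    have -> : c = cmax n; last exact: rtc_refl.
    by apply: functional_extensionality => j; apply/eqP; move/forallP: Hall.
  have [c' [HQ' Hs' Hmu _]] := ssm_step_lemma HQ Hs Hall.
  exfalso; have := sum_stable Hs'; rewrite /mu in Hmu Hk.
  move: Hmu Hk; rewrite /B; case: [exists j, c' j == n.-1]; case: [exists j, c j == n.-1]; rewrite /nat_of_bool; lia.
case: (boolP [forall j, c j == n.-1]) => Hall.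
  have -> : c = cmax n; last exact: rtc_refl.
  by apply: functional_extensionality => j; apply/eqP; move/forallP: Hall.
have [c' [HQ' Hs' Hmu Htr]] := ssm_step_lemma HQ Hs Hall.
apply: rtc_trans (IH c' _ HQ' Hs') (rtc_one Htr).
have := sum_stable Hs'; rewrite /mu in Hmu Hk *.
move: Hmu Hk; rewrite /B; case: [exists j, c' j == n.-1]; case: [exists j, c j == n.-1]; rewrite /nat_of_bool; lia.
Qed.

Lemma Q_SR n (c : config n) : 0 < n -> Qc c -> stable c -> SR c.
Proof.
move=> Hn HQ Hs; split => // d Hd.
have Hsd : stable d.
  apply: (@rtc_inv _ _ (@stable n) _ _ _ Hs Hd).
  by move=> x y [_ [i [_ Hy]]].
apply: rtc_trans (rtc_mono (@asm_ssm_trans n) (reach_cmax Hsd)) (reach_Q Hn HQ Hs).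
Qed.

Definition Pc n (c : config n) : Prop :=
  forall A : {set 'I_n}, A != set0 -> exists2 j, j \in A & #|A|.-1 <= c j.

Definition addc n (c y : config n) : config n := fun j => c j + y j.

Lemma asm_step_sum n (c d : config n) : asm_step c d -> (\sum_j d j).+1 = \sum_j c j.
Proof.
case=> i [Hi ->].
have Hn : 0 < n := leq_ltn_trans (leq0n _) (ltn_ord i).
have E : forall j, asm_topple c i j + (j == i) * n = c j + (j \in [set~ i]).
  move=> j; rewrite /asm_topple !inE; case: (boolP (j == i)) => [/eqP ->|Hji] /=.
    by rewrite mul1n addn0 subnK.
  by rewrite mul0n addn0 addn1.
have : \sum_j (asm_topple c i j + (j == i) * n) = \sum_j (c j + (j \in [set~ i])).
  by apply: eq_bigr => j _; exact: E j.
rewrite !big_split /= sum_indT cardsC1 card_ord.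
rewrite sum_pt.
move: (\sum_j asm_topple c i j) (\sum_j c j) => a b; lia.
Qed.

Lemma stable_no_step n (s d : config n) : stable s -> asm_step s d -> False.
Proof.
move=> Hs [i [Hi _]]; have := Hs i; move: Hi; rewrite /unstable_at.
have Hn : 0 < n := leq_ltn_trans (leq0n _) (ltn_ord i); lia.
Qed.

Lemma asm_exists n (c : config n) : exists d, asm_stabilises_to c d.
Proof.
have [k Hk] : exists k, \sum_j c j <= k by eexists.
elim: k c Hk => [|k IH] c Hk.
  exists c; split; first exact: rtc_refl.
  move=> i; have : c i <= 0.
    by apply: leq_trans Hk; rewrite (bigD1 i) //= leq_addr.
  lia.
case: (boolP [forall i, c i <= n.-1]) => [/forallP Hs|/forallPn [i Hi]].
  by exists c; split => //; exact: rtc_refl.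
have Hn : 0 < n := leq_ltn_trans (leq0n _) (ltn_ord i).
have Hst : asm_step c (asm_topple c i).
  by exists i; split => //; rewrite /unstable_at; move: Hi; lia.
have := asm_step_sum Hst => Hsum.
have Hk' : \sum_j asm_topple c i j <= k.
  move: Hsum Hk; move: (\sum_j asm_topple c i j) (\sum_j c j) => a b; lia.
have [d [Hd Hds]] := IH (asm_topple c i) Hk'.
by exists d; split => //; exact: rtc_step Hst Hd.
Qed.

Lemma diamond n (c d1 d2 : config n) : asm_step c d1 -> asm_step c d2 ->
  d1 = d2 \/ exists e, asm_step d1 e /\ asm_step d2 e.
Proof.
case=> i [Hi ->] [j [Hj ->]].
case: (eqVneq i j) => [->|Hij]; first by left.
right; exists (asm_topple (asm_topple c i) j); split.
  exists j; split => //; rewrite /unstable_at /asm_topple eq_sym (negbTE Hij).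
  by move: Hj; rewrite /unstable_at; lia.
exists i; split.
  rewrite /unstable_at /asm_topple (negbTE Hij).
  by move: Hi; rewrite /unstable_at; lia.
apply: functional_extensionality => k; rewrite /asm_topple.
move: Hi Hj; rewrite /unstable_at => Hi Hj.
have Hji : (j == i) = false by rewrite eq_sym (negbTE Hij).
case: (eqVneq k i) => [->|Hki]; first by rewrite ?eqxx (negbTE Hij); lia.
case: (eqVneq k j) => [->|Hkj]; first by rewrite ?eqxx ?Hji; lia.
by rewrite ?(negbTE Hki) ?(negbTE Hkj).
Qed.

Lemma conf1 n (c s : config n) : rtc (@asm_step n) c s -> stable s ->
  forall d, asm_step c d -> rtc (@asm_step n) d s.
Proof.
elim=> [x|x y z Hxy Hyz IH] Hs d Hd.
  by exfalso; exact: stable_no_step Hs Hd.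
case: (diamond Hxy Hd) => [<-|[e [Hye Hde]]] //.
exact: rtc_step Hde (IH Hs _ Hye).
Qed.

Lemma conf n (c d s : config n) : rtc (@asm_step n) c d -> rtc (@asm_step n) c s -> stable s ->
  rtc (@asm_step n) d s.
Proof.
move=> H; elim: H s => // x y z Hxy _ IH s Hxs Hs.
exact: IH (conf1 Hxs Hs Hxy) Hs.
Qed.

Lemma rtc_stable_eq n (s t : config n) : stable s -> rtc (@asm_step n) s t -> s = t.
Proof. move=> Hs H; case: H Hs => // x y z Hxy _ Hs; exfalso; exact: stable_no_step Hs Hxy. Qed.

Lemma lift_step n (c d y : config n) : asm_step c d -> asm_step (addc c y) (addc d y).
Proof.
case=> i [Hi ->]; exists i; split.
  by move: Hi; rewrite /unstable_at /addc; lia.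
apply: functional_extensionality => j; rewrite /addc /asm_topple.
case: (eqVneq j i) => [->|_] //=.
by move: Hi; rewrite /unstable_at; lia.
Qed.

Lemma lift_rtc n (c d y : config n) : rtc (@asm_step n) c d -> rtc (@asm_step n) (addc c y) (addc d y).
Proof. elim=> [x|x0 y0 z0 H _ IH]; [exact: rtc_refl|exact: rtc_step (lift_step y H) IH]. Qed.

Lemma addc0 n (e y : config n) : (forall j, y j = 0) -> addc e y = e.
Proof. by move=> H; apply: functional_extensionality => j; rewrite /addc H addn0. Qed.

Lemma lemmaA n k (y e s : config n) : \sum_j y j <= k -> stable e -> stable s ->
  rtc (@asm_step n) (addc e y) s -> rtc (@asm_trans n) e s.
Proof.
elim: k y e s => [|k IH] y e s Hk He Hs Hr.
  have Hy : forall j, y j = 0.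
    move=> j; have : y j <= 0 by apply: leq_trans Hk; rewrite (bigD1 j) //= leq_addr.
    lia.
  by rewrite addc0 // in Hr; rewrite -(rtc_stable_eq He Hr); exact: rtc_refl.
case: (boolP [exists v, 0 < y v]) => [/existsP [v Hv]|Hno]; last first.
  have Hy : forall j, y j = 0.
    by move=> j; move/existsPn: Hno => /(_ j); lia.
  by rewrite addc0 // in Hr; rewrite -(rtc_stable_eq He Hr); exact: rtc_refl.
set y' : config n := fun j => if j == v then (y j).-1 else y j.
have [s1 [Hr1 Hs1]] := asm_exists (add_grain e v).
have Htr : asm_trans e s1 by split => //; exists v.
have E : addc (add_grain e v) y' = addc e y.
  apply: functional_extensionality => j; rewrite /addc /add_grain /y'.
  by case: (eqVneq j v) => [->|_] //=; lia.
have H2 := lift_rtc y' Hr1; rewrite E in H2.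
have H3 := conf H2 Hr Hs.
apply: rtc_step Htr (IH y' s1 s _ Hs1 Hs H3).
have : \sum_j y' j < \sum_j y j.
  rewrite (bigD1 v) //= [X in _ < X](bigD1 v) //= /y' eqxx.
  rewrite (eq_bigr (fun j => y j)); last by move=> j /negbTE ->.
  lia.
lia.
Qed.

Definition gD n (c : config n) (D : {set 'I_n}) : config n :=
  fun j => if j \in D then c j + #|D| - n else c j + 1 + #|D|.

Lemma burning n (c : config n) : Pc c -> stable c ->
  rtc (@asm_step n) (addc c (fun _ => 1)) c.
Proof.
move=> HP Hs.
have Hg : forall k (D : {set 'I_n}), #|~: D| = k -> (forall j, j \in D -> n <= c j + #|D|) ->
    rtc (@asm_step n) (gD c D) c.
  elim=> [|k IH] D Hk Hinv.
    have H0 : ~: D = set0 by apply/eqP; rewrite -cards_eq0 Hk.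
    have HD : D = setT by rewrite -(setCK D) H0 setC0.
    have -> : gD c D = c; last exact: rtc_refl.
    apply: functional_extensionality => j; rewrite /gD HD inE cardsT card_ord; lia.
  have HA : ~: D != set0 by rewrite -card_gt0 Hk.
  have [j HjA Hj] := HP _ HA.
  have cD := cardsC D; rewrite card_ord in cD.
  have HjD : j \notin D by rewrite -in_setC.
  have Hst : asm_step (gD c D) (gD c (j |: D)).
    exists j; split.
      by rewrite /unstable_at /gD (negbTE HjD); move: Hj; rewrite Hk; lia.
    apply: functional_extensionality => l; rewrite /asm_topple /gD !inE cardsU1 HjD.
    case: (eqVneq l j) => [->|Hlj] /=; first by rewrite (negbTE HjD); move: Hj; rewrite Hk; lia.
    case: (boolP (l \in D)) => HlD /=; last by lia.
    have := Hinv _ HlD; move: (c l) (#|D|) => a b; rewrite ?add1n; lia.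
  apply: rtc_step Hst (IH _ _ _).
    have := cardsC (j |: D); rewrite card_ord cardsU1 HjD /=; move: cD Hk; move: #|D| #|~: D| #|~: (j |: D)| => a b d; blia.
  move=> l; rewrite cardsU1 HjD !inE => /orP [/eqP ->|HlD] /=.
    move: Hj cD; rewrite Hk; move: #|D| => a; blia.
  have := Hinv _ HlD; move: (c l) #|D| => a b; blia.
have -> : addc c (fun _ => 1) = gD c set0.
  by apply: functional_extensionality => j; rewrite /addc /gD inE cards0 addn0.
by apply: Hg (erefl _) _ => j; rewrite inE.
Qed.

Lemma burning_m n (c : config n) m : Pc c -> stable c ->
  rtc (@asm_step n) (addc c (fun _ => m)) c.
Proof.
move=> HP Hs; elim: m => [|m IH].
  by rewrite addc0 //; exact: rtc_refl.
have E : addc c (fun _ => m.+1) = addc (addc c (fun _ => 1)) (fun _ => m).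
  by apply: functional_extensionality => j; rewrite /addc; lia.
rewrite E; apply: rtc_trans (lift_rtc _ (burning HP Hs)) IH.
Qed.

Lemma P_DR n (c : config n) : 0 < n -> Pc c -> stable c -> DR c.
Proof.
move=> Hn HP Hs; split => // d Hd.
have Hsd : stable d.
  apply: (@rtc_inv _ _ (@stable n) _ _ _ Hs Hd).
  by move=> x y [_ [i [_ Hy]]].
apply: rtc_trans (reach_cmax Hsd) _.
have Hcm : stable (cmax n) by move=> j; rewrite /cmax.
apply: (lemmaA (k := \sum_j c j) (y := c) (leqnn _) Hcm Hs).
have -> : addc (cmax n) c = addc c (fun _ => n.-1).
  by apply: functional_extensionality => j; rewrite /addc /cmax addnC.
exact: burning_m.
Qed.

Definition swapc n (c : config n) (p q : 'I_n) (t : nat) : config n :=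
  fun j => if j == p then t.+1 else if j == q then t.-1 else c j.

Definition Phi n (c : config n) : nat := \sum_j c j ^ 2.

Lemma sum_ptA n (A : {set 'I_n}) (q : 'I_n) : \sum_(j in A) ((j == q) : nat) = (q \in A).
Proof.
case: (boolP (q \in A)) => HqA.
  rewrite (big_setD1 q) //= eqxx big1 // => j; rewrite !inE => /andP [/negbTE -> _] //.
by rewrite big1 // => j Hj; case: (eqVneq j q) => [E|//]; rewrite -E Hj in HqA.
Qed.

Lemma swap_id n (c : config n) p q t : p != q -> c p = t -> c q = t -> 0 < t ->
  forall j, swapc c p q t j + (j == q) = c j + (j == p).
Proof.
move=> Hpq Hp Hq Ht j; rewrite /swapc.
case: (eqVneq j p) => [->|Hjp]; first by rewrite (negbTE Hpq) Hp addn0 addn1.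
case: (eqVneq j q) => [->|Hjq] /=; last by rewrite !addn0.
by rewrite Hq; lia.
Qed.

Lemma swap_sumA n (c : config n) p q t (A : {set 'I_n}) : p != q -> c p = t -> c q = t -> 0 < t ->
  \sum_(j in A) swapc c p q t j + (q \in A) = \sum_(j in A) c j + (p \in A).
Proof.
move=> Hpq Hp Hq Ht; rewrite -!sum_ptA -!big_split /=.
by apply: eq_bigr => j _; exact: swap_id.
Qed.

Lemma swap_Q n (c : config n) p q t : Qc c -> p != q -> c p = t -> c q = t -> 0 < t ->
  Qc (swapc c p q t).
Proof.
move=> HQ Hpq Hp Hq Ht A.
have E := swap_sumA A Hpq Hp Hq Ht.
case: (boolP (q \in A)) => HqA; last first.
  apply: leq_trans (HQ A) _; apply: leq_sum => j Hj; rewrite /swapc.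
  case: (eqVneq j p) => [->|_]; first by rewrite Hp.
  by case: (eqVneq j q) => [E'|//]; move: HqA; rewrite -E' Hj.
case: (boolP (p \in A)) => HpA.
  by move: E; rewrite HqA HpA => /addIn ->; exact: HQ A.
have H1 := HQ (p |: A); rewrite (big_setU1 p) //= cardsU1 HpA in H1.
have H2 := HQ (A :\ q).
have HS : \sum_(j in A) c j = t + \sum_(j in A :\ q) c j by rewrite (big_setD1 q) //= Hq.
have cA : #|A| = (#|A :\ q|).+1 by rewrite (cardsD1 q A) HqA.
move: E H1 H2; rewrite HqA (negbTE HpA) HS cA Hp !bin2_rec.
move: (\sum_(j in A) swapc c p q t j) (\sum_(j in A :\ q) c j) 'C(#|A :\ q|, 2) #|A :\ q| => a b d e.
blia.
Qed.

Lemma swap_stable n (c : config n) p q t : stable c -> t < n.-1 -> stable (swapc c p q t).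
Proof.
move=> Hs Ht j; rewrite /swapc; case: (j == p) => //; case: (j == q) => //.
exact: leq_trans (leq_pred _) (ltnW Ht).
Qed.

Lemma swap_level n (c : config n) p q t k : p != q -> c p = t -> c q = t -> 0 < t ->
  has_level c k -> has_level (swapc c p q t) k.
Proof.
move=> Hpq Hp Hq Ht; rewrite /has_level => <-.
have : \sum_j (swapc c p q t j + (j == q) * 1) = \sum_j (c j + (j == p) * 1).
  by apply: eq_bigr => j _; rewrite !muln1; exact: swap_id.
rewrite !big_split /= !sum_pt => /addIn; done.
Qed.

Lemma swap_Phi n (c : config n) p q t : p != q -> c p = t -> c q = t -> 0 < t ->
  Phi c < Phi (swapc c p q t).
Proof.
move=> Hpq Hp Hq Ht.
have : \sum_j (swapc c p q t j ^ 2 + (j == q) * (2 * t)) =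
       \sum_j (c j ^ 2 + (j == p) * (2 * t + 1) + (j == q) * 1).
  apply: eq_bigr => j _; rewrite /swapc.
  case: (eqVneq j p) => [->|Hjp]; first by rewrite (negbTE Hpq) Hp /=; lia.
  case: (eqVneq j q) => [->|Hjq] /=; last by lia.
  by rewrite Hq; case: t Ht {Hp Hq} => //= t _; lia.
rewrite !big_split /= !sum_pt /Phi.
move: (\sum_j swapc c p q t j ^ 2) (\sum_j c j ^ 2) => a b; lia.
Qed.

Lemma nopair_P n (c : config n) : Qc c -> stable c ->
  (forall p q, p != q -> c p = c q -> c p = 0 \/ n.-1 <= c p) -> Pc c.
Proof.
move=> HQ Hs Hnp A HA.
case: (boolP [exists j in A, #|A|.-1 <= c j]) => [/existsP [j /andP [Hj1 Hj2]]|Hno].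
  by exists j.
exfalso.
have Hlt : forall j, j \in A -> c j < #|A|.-1.
  move=> j Hj; move/existsPn: Hno => /(_ j); rewrite Hj /=; lia.
have HAn : #|A| <= n by have := max_card (mem A); rewrite card_ord.
have Hinj : {in enum A &, injective c}.
  move=> j1 j2; rewrite !mem_enum => Hj1 Hj2 E.
  apply/eqP; apply: contraT => Hne.
  case: (Hnp _ _ Hne E) => [H0|Hbig].
    by have := Q_pair HQ Hne; rewrite -E H0.
  by have := Hlt _ Hj1; move: HAn Hbig; move: #|A| (c j1) => a b; lia.
have Hu : uniq [seq c j | j <- enum A] by rewrite map_inj_in_uniq // enum_uniq.
have Hsub : {subset [seq c j | j <- enum A] <= iota 0 #|A|.-1}.
  by move=> x /mapP [j]; rewrite mem_enum mem_iota => Hj ->; rewrite add0n Hlt.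
have := uniq_leq_size Hu Hsub; rewrite size_map size_iota -cardE.
have : 0 < #|A| by rewrite card_gt0.
move: #|A| => a; lia.
Qed.

Lemma Phi_bound n (c : config n) : stable c -> Phi c <= n * n.-1 ^ 2.
Proof.
move=> Hs; have -> : n * n.-1 ^ 2 = \sum_(j < n) n.-1 ^ 2 by rewrite sum_nat_const card_ord.
by apply: leq_sum => j _; rewrite leq_exp2r //; exact: Hs.
Qed.

Lemma swap_add n (c : config n) p q t : p != q -> c p = t -> c q = t -> 0 < t ->
  forall j, swapc c p q t j + swapc c q p t j = c j * 2.
Proof.
move=> Hpq Hp Hq Ht j; rewrite /swapc.
case: (eqVneq j p) => [->|Hjp]; first by rewrite (negbTE Hpq) ?eqxx Hp; lia.
case: (eqVneq j q) => [->|Hjq] /=; first by rewrite Hq; lia.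
lia.
Qed.

Local Open Scope ring_scope.

Lemma conv_pt (R : realType) n (S : config n -> Prop) (c : config n) :
  S c -> in_conv_hull S (fun i => ((c i)%:R : R)).
Proof.
move=> Hc; exists 1%N, (fun _ => c), (fun _ => 1); split.
- by [].
- by move=> j; exact: ler01.
- by rewrite big_ord1.
- by move=> i; rewrite big_ord1 mul1r.
Qed.

Lemma conv_mid (R : realType) n (S : config n -> Prop) (x1 x2 x : 'I_n -> R) :
  in_conv_hull S x1 -> in_conv_hull S x2 -> (forall i, x i = (x1 i + x2 i) / 2) ->
  in_conv_hull S x.
Proof.
move=> [m1 [p1 [w1 [Hp1 Hw1 Hs1 Hx1]]]] [m2 [p2 [w2 [Hp2 Hw2 Hs2 Hx2]]]] Hx.
pose p := fun j : 'I_(m1 + m2) => match split j with inl a => p1 a | inr b => p2 b end.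
pose w := fun j : 'I_(m1 + m2) => match split j with inl a => w1 a / 2 | inr b => w2 b / 2 end.
have sl : forall a : 'I_m1, split (lshift m2 a) = inl a by move=> a; exact: (unsplitK (inl a)).
have sr : forall b : 'I_m2, split (rshift m1 b) = inr b by move=> b; exact: (unsplitK (inr b)).
exists (m1 + m2)%N, p, w; split.
- by move=> j; rewrite /p; case: (split j).
- by move=> j; rewrite /w; case: (split j) => a; apply: divr_ge0.
- rewrite big_split_ord /w.
  under eq_bigr do rewrite sl.
  under [X in _ + X = _]eq_bigr do rewrite sr.
  rewrite -!mulr_suml Hs1 Hs2; lra.
- move=> i; rewrite Hx Hx1 Hx2 big_split_ord /w /p.
  under eq_bigr do rewrite sl.
  under [X in _ = _ + X]eq_bigr do rewrite sr.
  rewrite mulrDl !mulr_suml; congr (_ + _); apply: eq_bigr => a _; by rewrite mulrAC.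
Qed.

Lemma conv_main (R : realType) n k (c : config n) : (0 < n)%N -> Qc c -> stable c -> has_level c k ->
  in_conv_hull (fun c : config n => DR c /\ has_level c k) (fun i => ((c i)%:R : R)).
Proof.
move=> Hn; set B := (n * n.-1 ^ 2)%N.
have [K HK] : exists K, (B - Phi c <= K)%N by eexists.
elim: K c HK => [|K IH] c HK HQ Hs Hl;
  (case: (boolP [exists p, exists q, [&& p != q, c p == c q, (0 < c p)%N & (c p < n.-1)%N]])
     => [/existsP [p /existsP [q /and4P [Hpq /eqP Hpq' Ht Htn]]]|Hno]; last first).
- apply: conv_pt; split => //; apply: P_DR => //; apply: nopair_P => // p q Hpq E.
  move/existsPn: Hno => /(_ p) /existsPn /(_ q); rewrite Hpq E eqxx /=.
  rewrite -E; case: (c p) => [|t] /=; [by left|right]; lia.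
- exfalso; have := Phi_bound (swap_stable p q Hs Htn).
  have := swap_Phi Hpq (erefl _) (esym Hpq') Ht; rewrite /B in HK.
  move: HK; move: (Phi c) (Phi (swapc c p q (c p))) => a b; lia.
- apply: conv_pt; split => //; apply: P_DR => //; apply: nopair_P => // p q Hpq E.
  move/existsPn: Hno => /(_ p) /existsPn /(_ q); rewrite Hpq E eqxx /=.
  rewrite -E; case: (c p) => [|t] /=; [by left|right]; lia.
set t := c p.
have Hp : c p = t by [].
have Hq : c q = t by rewrite -Hpq'.
have Hqp : q != p by rewrite eq_sym.
have HIa : (B - Phi (swapc c p q t) <= K)%N.
  have := Phi_bound (swap_stable p q Hs Htn).
  have := swap_Phi Hpq Hp Hq Ht; rewrite /B in HK *.
  move: HK; move: (Phi c) (Phi (swapc c p q t)) => a b; lia.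
have HIb : (B - Phi (swapc c q p t) <= K)%N.
  have := Phi_bound (swap_stable q p Hs Htn).
  have := swap_Phi Hqp Hq Hp Ht; rewrite /B in HK *.
  move: HK; move: (Phi c) (Phi (swapc c q p t)) => a b; lia.
have Ca := IH _ HIa (swap_Q HQ Hpq Hp Hq Ht) (swap_stable p q Hs Htn) (swap_level Hpq Hp Hq Ht Hl).
have Cb := IH _ HIb (swap_Q HQ Hqp Hq Hp Ht) (swap_stable q p Hs Htn) (swap_level Hqp Hq Hp Ht Hl).
apply: conv_mid Ca Cb _ => i.
by rewrite -natrD swap_add // natrM mulfK // pnatr_eq0.
Qed.

Lemma intR_nat (R : realType) (m : nat) : ((Posz m)%:~R : R) = m%:R.
Proof. by rewrite -pmulrn. Qed.

Theorem mainTheorem11 (R : realType) (n k : nat) : (1 <= n)%N ->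
  forall z : 'I_n -> int,
    (exists c : config n, [/\ SR c, has_level c k & forall i, z i = Posz (c i)])
    <->
    in_conv_hull (fun c : config n => DR c /\ has_level c k)
                 (fun i => ((z i)%:~R : R)).
Proof.
move=> Hn z; split.
  move=> [c [HSR Hl Hz]].
  have -> : (fun i => ((z i)%:~R : R)) = (fun i => (c i)%:R).
    by apply: functional_extensionality => i; rewrite Hz intR_nat.
  exact: conv_main Hn (SR_Q HSR) HSR.1 Hl.
move=> [m [p [w [Hp Hw Hs Hx]]]].
have Hz0 : forall i, (0 <= z i)%R.
  move=> i; rewrite -(ler0z R) Hx; apply: sumr_ge0 => j _; apply: mulr_ge0 => //.
have Hzc : forall i, z i = Posz `|z i|%N by move=> i; rewrite gez0_abs.
set c : config n := fun i => `|z i|%N.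
have Hc : forall i, ((c i)%:R : R) = \sum_(j < m) w j * ((p j i)%:R).
  by move=> i; rewrite -Hx {1}Hzc intR_nat.
have HpQ : forall j, Qc (p j) by move=> j; exact: DR_Q (Hp j).1.
have Hps : forall j, stable (p j) by move=> j; exact: (Hp j).1.1.
have Hs' : stable c.
  move=> i; rewrite -(ler_nat R) Hc.
  have -> : ((n.-1)%:R : R) = \sum_(j < m) w j * (n.-1)%:R by rewrite -mulr_suml Hs mul1r.
  apply: ler_sum => j _; apply: ler_wpM2l => //; rewrite ler_nat; exact: Hps.
have HQ : Qc c.
  move=> A; rewrite -(ler_nat R) natr_sum.
  under eq_bigr do rewrite Hc.
  rewrite exchange_big /=.
  have -> : (('C(#|A|, 2))%:R : R) = \sum_(j < m) w j * ('C(#|A|, 2))%:R by rewrite -mulr_suml Hs mul1r.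
  apply: ler_sum => j _; rewrite -mulr_sumr; apply: ler_wpM2l => //.
  by rewrite -natr_sum ler_nat; exact: HpQ.
have Hl : has_level c k.
  apply/eqP; rewrite -(eqr_nat R) natr_sum.
  under eq_bigr do rewrite Hc.
  rewrite exchange_big /=.
  have -> : (('C(n, 2) + k)%:R : R) = \sum_(j < m) w j * ('C(n, 2) + k)%:R by rewrite -mulr_suml Hs mul1r.
  apply/eqP; apply: eq_bigr => j _; rewrite -mulr_sumr -natr_sum.
  by have := (Hp j).2; rewrite /has_level => ->.
exists c; split => //; exact: Q_SR Hn HQ Hs'.
Qed.
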